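(* For $n\ge 9$, $t(K(n,3)) =\frac{n}{3}-1$. Moreover, if $S$ is a vertex cut of $K(n,3)$ such that $\frac{|S|}{c(K(n,3)\setminus S)} = \frac{n}{3}-1$, then $S$ is the complement of a maximum independent set of $K(n,3)$.
   Context: The Kneser graph $K(n,k)$ has as vertices the $k$-element subsets of $[n]=\{1,\dots,n\}$, two vertices being adjacent iff they are disjoint. A vertex cut is a set $S$ of vertices whose removal disconnects the graph; $c(G\setminus S)$ is the number of connected components after deleting $S$; the toughness is $t(G)=\min_S |S|/c(G\setminus S)$ over vertex cuts $S$. *)

(* Defs.v *)
From mathcomp Require Import all_boot all_order all_algebra.
Set Implicit Arguments. Unset Strict Implicit. Unset Printing Implicit Defensive.
Import Order.TTheory GRing.Theory Num.Theory.

Section Graphs.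
Variables (T : finType) (e : rel T).

Definition del_adj (S : {set T}) : rel T :=
  fun x y => [&& x \notin S, y \notin S & e x y].

(* The connected component of x in G \ S (x assumed outside S). *)
Definition comp_of (S : {set T}) (x : T) : {set T} :=
  [set y in ~: S | connect (del_adj S) x y].

Definition ncomp (S : {set T}) : nat :=
  #|[set comp_of S x | x in ~: S]|.

Definition vertex_cut (S : {set T}) : bool := 1 < ncomp S.

(* The neutral element
   #|T| exceeds every ratio |S|/c(G\S) <= |S| < |T| of a vertex cut, so it only
   matters when there is no vertex cut (complete graphs), which is irrelevant here. *)
Definition toughness : rat :=
  (\big[Order.min/(#|T|%:R)]_(S : {set T} | vertex_cut S) (#|S|%:R / (ncomp S)%:R))%R.

Definition independent (I : {set T}) : bool :=
  [forall x in I, forall y in I, ~~ e x y].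

Definition maximum_independent (I : {set T}) : bool :=
  independent I && [forall J : {set T}, independent J ==> (#|J| <= #|I|)].

End Graphs.

Definition kvert (n k : nat) := {A : {set 'I_n} | #|A| == k}.

Definition kneser (n k : nat) : rel (kvert n k) :=
  fun A B => [disjoint val A & val B].
Arguments kneser n k : clear implicits.

(* Main.v *)
Require Import Defs.
From mathcomp Require Import all_boot all_order all_algebra.
From mathcomp Require Import zify ring lra.
Set Implicit Arguments. Unset Strict Implicit. Unset Printing Implicit Defensive.

Lemma disjP (S : finType) (A B : {set S}) :
  reflect (forall x, x \in A -> x \in B -> False) [disjoint A & B].
Proof.
rewrite -setI_eq0; apply: (iffP eqP) => [e x xA xB | h].
  have : x \in A :&: B by rewrite inE xA xB.
  by rewrite e inE.
apply/setP => x; rewrite !inE; apply/negP => /andP[xA xB]; exact: h x xA xB.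
Qed.

Section Comb.
Variable T : finType.
Implicit Types (U X A B s t : {set T}) (F P Q : {set {set T}}).

Definition K k U := [set A : {set T} | (A \subset U) && (#|A| == k)].

Lemma inK k U A : (A \in K k U) = (A \subset U) && (#|A| == k).
Proof. by rewrite inE. Qed.

Lemma card_K k U : #|K k U| = 'C(#|U|, k).
Proof. by rewrite -cards_draws; apply: eq_card => A; rewrite !inE. Qed.

Definition cross P Q := forall A B, A \in P -> B \in Q -> ~~ [disjoint A & B].
Definition icg F := cross F F.

Lemma card_sel (S : finType) (P : {set S}) (p : pred S) :
  #|[set A in P | p A]| = \sum_(A in P) p A.
Proof.
rewrite -sum1_card [RHS]big_mkcond [LHS]big_mkcond /=; apply: eq_bigr => A _.
by rewrite !inE; case: (A \in P); case: (p A).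
Qed.

Lemma cardUD U A : A \subset U -> #|U :\: A| = #|U| - #|A|.
Proof. by move=> sAU; rewrite cardsD (setIidPr sAU). Qed.

Lemma DC k U P : P \subset K k U ->
  #|P| * 'C(#|U| - k, k) = \sum_(B in K k U) #|[set A in P | [disjoint A & B]]|.
Proof.
move=> sPK.
under [RHS]eq_bigr => B _ do rewrite card_sel.
rewrite exchange_big /= -sum_nat_const; apply: eq_bigr => A AP.
have /andP[sAU /eqP cA] : (A \subset U) && (#|A| == k) by rewrite -inK (subsetP sPK).
rewrite -card_sel -cA -cardUD // cA -card_K; apply: eq_card => B.
by rewrite !inE subsetD disjoint_sym; case: (B \subset U); case: (#|B| == k); case: [disjoint A & B].
Qed.

Lemma DC_bound k U P Q w M : P \subset K k U -> Q \subset K k U -> cross P Q ->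
  (forall B, B \in K k U -> #|[set A in P | [disjoint A & B]]| * w <= M) ->
  #|P| * 'C(#|U| - k, k) * w <= ('C(#|U|, k) - #|Q|) * M.
Proof.
move=> sPK sQK cPQ hB.
rewrite DC // big_distrl /=.
rewrite (bigID (fun B => B \in Q)) /=.
rewrite big1 ?add0n; last first.
  move=> B /andP[_ BQ]; apply/eqP; rewrite muln_eq0; apply/orP; left.
  rewrite cards_eq0; apply/eqP/setP => A; rewrite !inE.
  by apply/negP => /andP[AP dAB]; move: (cPQ A B AP BQ); rewrite dAB.
apply: (@leq_trans (\sum_(B in K k U | B \notin Q) M)).
  by apply: leq_sum => B /andP[BK _]; apply: hB.
rewrite sum_nat_const -card_K; apply: leq_mul => //.
have -> : #|[pred B in K k U | B \notin Q]| = #|K k U :\: Q|.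
  by apply: eq_card => B; rewrite !inE andbC.
by rewrite cardsD (setIidPr sQK).
Qed.

End Comb.

Lemma pick4 (S : finType) (H : {set S}) : 3 < #|H| ->
  exists a b c d, [/\ a \in H, b \in H, c \in H, d \in H &
    [&& a != b, a != c, a != d, b != c, b != d & c != d]].
Proof.
move=> h.
have /card_gt0P[a aH] : 0 < #|H| by lia.
have h1 : 2 < #|H :\ a| by move: h; rewrite (cardsD1 a H) aH; lia.
have /card_gt0P[b bH] : 0 < #|H :\ a| by lia.
have h2 : 1 < #|H :\ a :\ b| by move: h1; rewrite (cardsD1 b (H :\ a)) bH; lia.
have /card_gt0P[c cH] : 0 < #|H :\ a :\ b| by lia.
have h3 : 0 < #|H :\ a :\ b :\ c| by move: h2; rewrite (cardsD1 c (H :\ a :\ b)) cH; lia.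
have /card_gt0P[d dH] := h3.
move: bH cH dH; rewrite !inE => /andP[ba bH] /and3P[cb ca cH] /and4P[dc db da dH].
exists a, b, c, d; split => //.
by rewrite eq_sym ba eq_sym ca eq_sym da eq_sym cb eq_sym db eq_sym dc.
Qed.

Lemma card3P (S : finType) (A : {set S}) : #|A| = 3 ->
  exists x y z, [/\ A = [set x; y; z], x != y, y != z & x != z].
Proof.
move=> h.
have /card_gt0P[x xA] : 0 < #|A| by lia.
have : #|A :\ x| == 2 by move: h; rewrite (cardsD1 x A) xA; lia.
move/cards2P => [y [z [yz e]]].
have : x \notin A :\ x by rewrite !inE eqxx.
rewrite e !inE negb_or => /andP[xy xz].
exists x, y, z; split => //.
by rewrite -(setD1K xA) e setUA.
Qed.

Section Conc.
Variable p : nat.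
Local Notation m := p.+1.
Notation tri3 := (nat * nat * nat)%type.
Definition tl (t : tri3) := [:: t.1.1; t.1.2; t.2].
Definition tri (t : tri3) : {set 'I_m} := [set inord t.1.1; inord t.1.2; inord t.2].
Definition dl (t u : tri3) := ~~ has (fun x => x \in tl u) (tl t).
Definition bnd (t : tri3) := all (fun x => x < m) (tl t).
Definition class_ok (L : seq tri3) :=
  all bnd L && all (fun t1 => all (fun t2 => all (fun t3 => all (fun t4 =>
     [&& t1 != t2, t1 != t3, t1 != t4, t2 != t3, t2 != t4 & t3 != t4] ==>
     [|| dl t1 t2, dl t1 t3, dl t1 t4, dl t2 t3, dl t2 t4 | dl t3 t4]) L) L) L) L.
Definition cover_ok (cls : seq (seq tri3)) :=
  all (fun i => all (fun j => all (fun k => [&& i != j, j != k & i != k] ==>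
      has (fun L => has (fun t => perm_eq (tl t) [:: i; j; k]) L) cls)
      (iota 0 m)) (iota 0 m)) (iota 0 m).

Lemma inord_eq (w : 'I_m) a : a < m -> (w == inord a) = (val w == a).
Proof. by move=> h; rewrite -val_eqE /= inordK. Qed.

Lemma tri_mem t w : bnd t -> (w \in tri t) = (val w \in tl t).
Proof.
case: t => [[a b] c]; rewrite /bnd /tl /tri /= => /and4P[ha hb hc _].
by rewrite !inE !inord_eq // orbA.
Qed.

Lemma dl_disj t u : bnd t -> bnd u -> dl t u -> [disjoint tri t & tri u].
Proof.
move=> bt bu /hasPn h; apply/disjP => w; rewrite !tri_mem // => wt wu.
by move: (h _ wt); rewrite wu.
Qed.

Lemma cover_prop cls : cover_ok cls -> forall A : {set 'I_m}, #|A| = 3 ->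
  has (fun L => has (fun t => (A == tri t) && bnd t) L) cls.
Proof.
move=> hc A /card3P [x [y [z [-> xy yz xz]]]].
have mi : forall i, i < m -> i \in iota 0 m by move=> i hi; rewrite mem_iota add0n.
move: hc => /allP /(_ (val x) (mi _ (ltn_ord x))) /allP /(_ (val y) (mi _ (ltn_ord y))).
move=> /allP /(_ (val z) (mi _ (ltn_ord z))).
rewrite !val_eqE xy yz xz /= => /hasP [L Lc /hasP [t tL pt]].
apply/hasP; exists L => //; apply/hasP; exists t => //.
have bt : bnd t.
  by apply/allP => v; rewrite (perm_mem pt) !inE => /or3P[] /eqP ->.
rewrite bt andbT; apply/eqP/setP => w; rewrite tri_mem // (perm_mem pt).
by rewrite !inE orbA.
Qed.

Lemma class_bound L (G : {set {set 'I_m}}) : class_ok L -> icg G ->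
  #|[set A in G | has (fun t => A == tri t) L]| <= 3.
Proof.
move=> /andP[/allP bL hL] cG; rewrite leqNgt; apply/negP.
move/pick4 => [A1 [A2 [A3 [A4 [h1 h2 h3 h4 hd]]]]].
move: h1 h2 h3 h4; rewrite !inE.
move=> /andP[G1 /hasP[t1 t1L /eqP e1]] /andP[G2 /hasP[t2 t2L /eqP e2]].
move=> /andP[G3 /hasP[t3 t3L /eqP e3]] /andP[G4 /hasP[t4 t4L /eqP e4]].
move: hL => /allP /(_ t1 t1L) /allP /(_ t2 t2L) /allP /(_ t3 t3L) /allP /(_ t4 t4L).
have ne : forall (X Y : {set 'I_m}) u v, X != Y -> X = tri u -> Y = tri v -> u != v.
  by move=> X Y u v XY eX eY; apply: contraNneq XY => euv; rewrite eX eY euv.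
move: hd => /andP[d12 /andP[d13 /andP[d14 /andP[d23 /andP[d24 d34]]]]].
rewrite (ne _ _ _ _ d12 e1 e2) (ne _ _ _ _ d13 e1 e3) (ne _ _ _ _ d14 e1 e4).
rewrite (ne _ _ _ _ d23 e2 e3) (ne _ _ _ _ d24 e2 e4) (ne _ _ _ _ d34 e3 e4) /=.
have D : forall X Y u v, X \in G -> Y \in G -> X = tri u -> Y = tri v ->
    u \in L -> v \in L -> ~~ dl u v.
  move=> X Y u v XG YG eX eY uL vL; apply/negP => duv.
  by move: (cG X Y XG YG); rewrite eX eY dl_disj // ?bL.
by rewrite (negbTE (D _ _ _ _ G1 G2 e1 e2 t1L t2L)) (negbTE (D _ _ _ _ G1 G3 e1 e3 t1L t3L))
  (negbTE (D _ _ _ _ G1 G4 e1 e4 t1L t4L)) (negbTE (D _ _ _ _ G2 G3 e2 e3 t2L t3L))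
  (negbTE (D _ _ _ _ G2 G4 e2 e4 t2L t4L)) (negbTE (D _ _ _ _ G3 G4 e3 e4 t3L t4L)).
Qed.

Lemma conc_aux cls (G G' : {set {set 'I_m}}) : all class_ok cls -> icg G ->
  G' \subset G -> (forall A, A \in G' -> has (fun L => has (fun t => A == tri t) L) cls) ->
  #|G'| <= 3 * size cls.
Proof.
move=> + cG; elim: cls G' => [|L cls IH] G' hcl sG cov.
  rewrite leqn0 cards_eq0; apply/eqP/setP => A; rewrite inE.
  by apply/negP => /cov.
move: hcl => /= /andP[hL hcl].
rewrite -(cardsID [set A in G' | has (fun t => A == tri t) L]) mulnS.
apply: leq_add.
  apply: (leq_trans _ (class_bound (G := G) hL cG)); apply: subset_leq_card.
  by apply/subsetP => A; rewrite !inE => /andP[_ /andP[AG ->]]; rewrite (subsetP sG).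
apply: IH => //.
  by apply/subsetP => A; rewrite !inE => /andP[_ AG]; rewrite (subsetP sG).
move=> A; rewrite !inE => /andP[nL AG]; move: (cov A AG) => /= /orP[]//.
by move=> h; move: nL; rewrite AG h.
Qed.

Lemma conc_bound cls (G : {set {set 'I_m}}) : cover_ok cls -> all class_ok cls ->
  (forall A, A \in G -> #|A| == 3) -> icg G -> #|G| <= 3 * size cls.
Proof.
move=> hc hcl hG cG; apply: (conc_aux hcl cG (subxx G)).
move=> A AG; move: (cover_prop hc (eqP (hG A AG))) => /hasP[L Lc /hasP[t tL /andP[e _]]].
by apply/hasP; exists L => //; apply/hasP; exists t.
Qed.

End Conc.

Definition cls7 : seq (seq (nat*nat*nat)) :=
 [:: [:: (0,2,3); (0,1,2); (2,3,5); (3,4,5); (0,1,6); (4,5,6); (1,4,6)];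
     [:: (2,4,6); (0,3,6); (2,4,5); (1,2,5); (3,4,6); (0,1,5); (0,1,3)];
     [:: (0,1,4); (1,3,6); (3,5,6); (0,2,5); (0,2,4); (2,5,6); (1,3,4)];
     [:: (1,3,5); (0,4,6); (0,2,6); (0,4,5); (2,3,6); (1,4,5); (1,2,3)];
     [:: (0,3,4); (2,3,4); (1,2,4); (0,5,6); (0,3,5); (1,2,6); (1,5,6)]].
Definition cls8 : seq (seq (nat*nat*nat)) :=
 [:: [:: (2,5,7); (0,4,6); (3,4,7); (0,1,2); (1,2,5); (3,5,7); (3,4,6); (0,1,6)];
     [:: (2,4,6); (0,2,6); (1,3,7); (2,4,5); (0,3,6); (1,5,7); (0,1,3); (4,5,7)];
     [:: (0,1,4); (2,3,4); (2,6,7); (2,3,7); (0,5,6); (5,6,7); (0,1,5); (1,3,4)];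
     [:: (1,4,7); (0,2,3); (0,1,7); (0,3,7); (2,3,5); (2,5,6); (4,5,6); (1,4,6)];
     [:: (1,3,5); (4,6,7); (1,3,6); (0,2,5); (1,6,7); (0,2,4); (0,3,5); (2,4,7)];
     [:: (0,3,4); (0,2,7); (1,2,7); (3,5,6); (3,4,5); (1,2,6); (1,5,6); (0,4,7)];
     [:: (1,2,4); (0,4,5); (0,6,7); (2,3,6); (1,4,5); (1,2,3); (3,6,7); (0,5,7)]].

Lemma cov7 : cover_ok 6 cls7. Proof. by vm_compute. Qed.
Lemma cls7_ok : all (class_ok 6) cls7. Proof. by vm_compute. Qed.
Lemma cov8 : cover_ok 7 cls8. Proof. by vm_compute. Qed.
Lemma cls8_ok : all (class_ok 7) cls8. Proof. by vm_compute. Qed.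

Lemma ekr_small m : (m == 7) || (m == 8) -> forall G : {set {set 'I_m}},
  (forall A, A \in G -> #|A| == 3) -> icg G -> #|G| * m <= 3 * 'C(m, 3).
Proof.
case/orP => /eqP -> G hG cG.
  by move: (conc_bound cov7 cls7_ok hG cG) => /= h; rewrite -[3 * 'C(7,3)]/(15 * 7) leq_pmul2r.
by move: (conc_bound cov8 cls8_ok hG cG) => /= h; rewrite -[3 * 'C(8,3)]/(21 * 8) leq_pmul2r.
Qed.

Section EKR.
Variable T : finType.
Implicit Types (U X A B : {set T}) (F P Q : {set {set T}}).

Lemma transfer U F : F \subset K 3 U -> icg F ->
  exists G : {set {set 'I_#|U|}}, [/\ #|G| = #|F|, (forall C : {set 'I_#|U|}, C \in G -> #|C| == 3) & icg G].
Proof.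
move=> sFK cF.
pose f : 'I_#|U| -> T := enum_val.
have finj : injective f := @enum_val_inj _ _.
have img : forall x, x \in U -> exists i, f i = x.
  by move=> x xU; exists (enum_rank_in xU x); rewrite /f enum_rankK_in.
have pre : forall A, A \subset U -> f @: (f @^-1: A) = A.
  move=> A sAU; apply/setP => x; apply/imsetP/idP => [[i]|xA].
    by rewrite inE => iA ->.
  have [i fi] := img x (subsetP sAU x xA).
  by exists i; rewrite ?inE fi.
have sub : forall A, A \in F -> A \subset U.
  by move=> A AF; move: (subsetP sFK A AF); rewrite inK => /andP[].
exists ((fun A : {set T} => f @^-1: A) @: F); split.
- apply: card_in_imset => A B AF BF e.
  by rewrite -(pre A (sub A AF)) -(pre B (sub B BF)) e.
- move=> A' /imsetP[A AF ->].
  rewrite -(card_imset _ finj) pre ?sub //.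
  by move: (subsetP sFK A AF); rewrite inK => /andP[].
- move=> A' B' /imsetP[A AF ->] /imsetP[B BF ->]; apply/negP => dAB.
  move: (cF A B AF BF); apply/negP/negPn/disjP => x xA xB.
  have [i fi] := img x (subsetP (sub A AF) x xA).
  by move/disjP: dAB => /(_ i); rewrite !inE fi; apply.
Qed.

Lemma ekr_step m U F : #|U| = m -> 6 <= m -> F \subset K 3 U -> icg F ->
  (forall B, B \in K 3 U -> #|[set A in F | [disjoint A & B]]| * (m - 3) <= 3 * 'C(m - 3, 3)) ->
  #|F| * m <= 3 * 'C(m, 3).
Proof.
move=> hU hm sFK cF hB.
have := DC_bound sFK sFK cF hB; rewrite hU => h.
have fN : #|F| <= 'C(m, 3) by rewrite -hU -card_K subset_leq_card.
have cpos : 0 < 'C(m - 3, 3) by rewrite bin_gt0; lia.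
move: h; rewrite mulnAC mulnA leq_pmul2r // => h.
nia.
Qed.

Lemma ekr m : forall U F, #|U| = m -> (m == 3) || (6 <= m) -> F \subset K 3 U -> icg F ->
  #|F| * m <= 3 * 'C(m, 3).
Proof.
elim/ltn_ind: m => m IH U F hU hm sFK cF.
have [m3|m3] := eqVneq m 3.
  rewrite m3 in hU *; have : #|F| <= 'C(#|U|, 3) by rewrite -card_K subset_leq_card.
  by rewrite hU /= => h; rewrite -[3 * _]/(1 * 3) leq_pmul2r.
have [m78|m78] := boolP ((m == 7) || (m == 8)).
  have [G [cG hG iG]] := transfer sFK cF.
  rewrite -cG -hU; apply: ekr_small => //; by rewrite hU.
apply: (ekr_step hU) => //; first by move: hm m78; rewrite (negbTE m3); lia.
move=> B /[dup] BK; rewrite inK => /andP[sBU /eqP cB].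
have hU' : #|U :\: B| = m - 3 by rewrite cardUD // hU cB.
apply: (IH (m - 3) _ (U :\: B)) => //.
- by move: hm m78; rewrite (negbTE m3); lia.
- by move: hm m78; rewrite (negbTE m3); lia.
- apply/subsetP => A; rewrite inE => /andP[AF dAB].
  move: (subsetP sFK A AF); rewrite !inK subsetD dAB => /andP[-> ->].
  by [].
- move=> A A' ; rewrite !inE => /andP[AF _] /andP[A'F _]; exact: cF.
Qed.

End EKR.

Section Block.
Variable T : finType.
Implicit Types (U X A B s t p q x y : {set T}) (F P Q : {set {set T}}).

Lemma disjUD s p : [disjoint p & s] -> (s :|: p) :\: s = p.
Proof.
move=> d; apply/setP => z; rewrite !inE; case: (boolP (z \in s)) => zs /=.
  by rewrite (disjointFl d zs).
by [].
Qed.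

Lemma disj_sub s U p : [disjoint s & U] -> p \subset U -> [disjoint p & s].
Proof.
move=> d sp; apply/disjP => z zp zs; move/disjP: d => /(_ z zs); apply.
exact: (subsetP sp).
Qed.

Lemma block k U s t P Q : [disjoint s & U] -> [disjoint t & U] -> [disjoint s & t] ->
  2 * k <= #|U| ->
  (forall x, x \in P -> exists2 p, p \in K k U & x = s :|: p) ->
  (forall y, y \in Q -> exists2 q, q \in K k U & y = t :|: q) ->
  cross P Q -> #|P| + #|Q| <= 'C(#|U|, k).
Proof.
move=> dsU dtU dst hk hP hQ cPQ.
pose PP := [set x :\: s | x in P]; pose QQ := [set y :\: t | y in Q].
have cP : #|PP| = #|P|.
  apply: card_in_imset => x1 x2 /hP[p1 p1K ->] /hP[p2 p2K ->].
  move: p1K p2K; rewrite !inK => /andP[s1 _] /andP[s2 _].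
  by rewrite !disjUD ?(disj_sub dsU) // => ->.
have cQ : #|QQ| = #|Q|.
  apply: card_in_imset => x1 x2 /hQ[p1 p1K ->] /hQ[p2 p2K ->].
  move: p1K p2K; rewrite !inK => /andP[s1 _] /andP[s2 _].
  by rewrite !disjUD ?(disj_sub dtU) // => ->.
have sPP : PP \subset K k U.
  apply/subsetP => z /imsetP[x /hP[p pK ->] ->].
  by move: (pK); rewrite inK => /andP[sp _]; rewrite disjUD ?(disj_sub dsU).
have sQQ : QQ \subset K k U.
  apply/subsetP => z /imsetP[x /hQ[p pK ->] ->].
  by move: (pK); rewrite inK => /andP[sp _]; rewrite disjUD ?(disj_sub dtU).
have cr : cross PP QQ.
  move=> z1 z2 /imsetP[x /[dup] xP /hP[p pK ex] ->] /imsetP[y /[dup] yQ /hQ[q qK ey] ->].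
  move: (pK) (qK); rewrite !inK => /andP[sp _] /andP[sq _].
  rewrite ex ey !disjUD ?(disj_sub dsU) ?(disj_sub dtU) //.
  apply/negP => dpq; move: (cPQ x y xP yQ); rewrite ex ey; apply/negP/negPn.
  apply/disjP => z; rewrite !inE => /orP[zs|zp] /orP[zt|zq].
  - by move/disjP: dst => /(_ z zs zt).
  - by move/disjP: dsU => /(_ z zs (subsetP sq z zq)).
  - by move/disjP: dtU => /(_ z zt (subsetP sp z zp)).
  - by move/disjP: dpq => /(_ z zp zq).
have hB : forall B, B \in K k U -> #|[set A in PP | [disjoint A & B]]| * 1 <= 'C(#|U| - k, k).
  move=> B; rewrite inK => /andP[sBU /eqP cB]; rewrite muln1.
  rewrite -cB -cardUD // cB -card_K; apply: subset_leq_card.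
  apply/subsetP => A; rewrite inE => /andP[/(subsetP sPP)]; rewrite !inK => /andP[sAU ->] dAB.
  by rewrite subsetD sAU dAB.
have := DC_bound sPP sQQ cr hB; rewrite muln1.
have cpos : 0 < 'C(#|U| - k, k) by rewrite bin_gt0; lia.
rewrite leq_pmul2r // cP cQ => h.
have : #|QQ| <= 'C(#|U|, k) by rewrite -card_K subset_leq_card.
rewrite cQ; lia.
Qed.

End Block.

Lemma cardU_disj (S : finType) (A B : {set S}) : [disjoint A & B] -> #|A :|: B| = #|A| + #|B|.
Proof. by move=> d; rewrite cardsU (disjoint_setI0 d) cards0 subn0. Qed.

Lemma arE p1 p2 p3 q1 q2 q3 c2 c1 n1 n2 n3 w : p1 + q1 <= c2 -> p2 + q2 <= c2 ->
    p3 + q3 <= c1 -> c2 <= n1 -> c2 <= n2 -> c1 <= n3 -> n1 + n2 + n3 <= w ->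
    p1 + p2 + p3 + (q1 + q2 + q3) <= w.
Proof. lia. Qed.

Section Core.
Variable T : finType.
Implicit Types (U X A B s t p q x y : {set T}) (F P Q W : {set {set T}}).


Lemma cardC' A : #|~: A| = #|T| - #|A|.
Proof. by rewrite -(cardsC A); lia. Qed.

Lemma sub2 (u v : T) s : s \subset [set u; v] -> s != set0 ->
  [\/ s = [set u], s = [set v] | s = [set u; v]].
Proof.
move=> ss ne.
have hs : forall z, z \in s -> (z == u) || (z == v) by move=> z /(subsetP ss); rewrite !inE.
case: (boolP (u \in s)) => us; case: (boolP (v \in s)) => vs.
- by constructor 3; apply/setP => z; rewrite !inE; apply/idP/idP => [/hs|/orP[]/eqP->].
- constructor 1; apply/setP => z; rewrite !inE; apply/idP/idP => [/[dup] zs /hs /orP[]// /eqP zv|/eqP->//].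
  by move: vs; rewrite -zv zs.
- constructor 2; apply/setP => z; rewrite !inE; apply/idP/idP => [/[dup] zs /hs /orP[]// /eqP zu|/eqP->//].
  by move: us; rewrite -zu zs.
- case/set0Pn: ne => z /[dup] zs /hs /orP[] /eqP ez; [by move: us; rewrite -ez zs|by move: vs; rewrite -ez zs].
Qed.

Lemma sel3 W (f : {set T} -> {set T}) t1 t2 t3 : t1 != t2 -> t1 != t3 -> t2 != t3 ->
  #|[set y in W | f y == t1]| + #|[set y in W | f y == t2]| + #|[set y in W | f y == t3]|
  <= #|W|.
Proof.
move=> n12 n13 n23.
have d : forall ti tj, ti != tj -> [disjoint [set y in W | f y == ti] & [set y in W | f y == tj]].
  move=> ti tj nij; apply/disjP => y; rewrite !inE => /andP[_ /eqP e1] /andP[_ /eqP e2].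
  by move: nij; rewrite -e1 -e2 eqxx.
rewrite -cardU_disj ?d // -cardU_disj; last first.
  apply/disjP => y y12 y3; move: y12; rewrite inE => /orP[y1|y2].
    by move/disjP: (d _ _ n13) => /(_ y y1 y3).
  by move/disjP: (d _ _ n23) => /(_ y y2 y3).
apply: subset_leq_card; apply/subsetP => y; rewrite !inE.
by case/orP => [/orP[]|] /andP[].
Qed.

Lemma dec (a b x s : {set T}) k : [disjoint x & a] -> x :&: b = s -> #|x| = 3 -> #|s| + k = 3 ->
  exists2 p, p \in K k (~: (a :|: b)) & x = s :|: p.
Proof.
move=> dxa exb cx hk; exists (x :\: b); last by rewrite -exb setID.
rewrite inK cardsD exb cx; apply/andP; split; last by apply/eqP; lia.
apply/subsetP => z; rewrite !inE negb_or => /andP[zb zx]; rewrite zb andbT.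
by apply/negP => za; move/disjP: dxa => /(_ z zx za).
Qed.

Variables (a b : {set T}).
Hypotheses (ca : #|a| = 3) (cb : #|b| = 3) (nab : ~~ [disjoint a & b]) (ab : a != b).
Variables (P Q : {set {set T}}).
Hypothesis hP : forall x, x \in P -> [&& #|x| == 3, [disjoint x & a] & ~~ [disjoint x & b]].
Hypothesis hQ : forall y, y \in Q -> [&& #|y| == 3, [disjoint y & b] & ~~ [disjoint y & a]].
Hypothesis cPQ : cross P Q.
Local Notation U := (~: (a :|: b)).

Lemma blockPQ s t k : s \subset b :\: a -> t \subset a :\: b -> #|s| + k = 3 -> #|t| + k = 3 ->
  2 * k <= #|U| ->
  #|[set x in P | x :&: b == s]| + #|[set y in Q | y :&: a == t]| <= 'C(#|U|, k).
Proof.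
move=> ss st hs ht hk; apply: (block (s := s) (t := t)) => //.
- by apply/disjP => z /(subsetP ss); rewrite !inE => /andP[_ zb]; rewrite zb orbT.
- by apply/disjP => z /(subsetP st); rewrite !inE => /andP[_ za]; rewrite za.
- apply/disjP => z /(subsetP ss); rewrite !inE => /andP[za _] /(subsetP st); rewrite !inE => /andP[_ za'].
  by move: za; rewrite za'.
- move=> x; rewrite inE => /andP[/hP /and3P[/eqP cx dxa _] /eqP e].
  exact: dec dxa e cx hs.
- move=> y; rewrite inE => /andP[/hQ /and3P[/eqP cy dyb _] /eqP e].
  by rewrite setUC; exact: dec dyb e cy ht.
- by move=> x y; rewrite !inE => /andP[xP _] /andP[yQ _]; apply: cPQ.
Qed.

Lemma blockN t k : t \subset a :\: b -> #|t| + k = 3 -> 0 < #|t| ->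
  'C(#|U|, k) <= #|[set y in K 3 (~: b) :\: K 3 (~: a) | y :&: a == t]|.
Proof.
move=> st ht tpos.
have dtq : forall q, q \in K k U -> [disjoint q & t].
  move=> q; rewrite inK => /andP[sq _]; apply/disjP => z /(subsetP sq).
  by rewrite !inE negb_or => /andP[za _] /(subsetP st); rewrite !inE (negbTE za) andbF.
rewrite -card_K -(card_in_imset (f := fun q => t :|: q)); last first.
  move=> q1 q2 q1K q2K /= e.
  by rewrite -(disjUD (dtq _ q1K)) -(disjUD (dtq _ q2K)) e.
apply: subset_leq_card; apply/subsetP => y /imsetP[q /[dup] qK /dtq dqt ->].
move: qK; rewrite inK => /andP[sq /eqP cq].
have [z zt] : exists z, z \in t by apply/card_gt0P.
have cy : #|t :|: q| = 3 by rewrite cardU_disj ?cq ?ht // disjoint_sym.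
rewrite !inE cy eqxx !andbT; apply/andP; split; first (apply/andP; split).
- apply/negP => /subsetP /(_ z); rewrite !inE zt => /(_ isT).
  by move: (subsetP st z zt); rewrite !inE => /andP[_ ->].
- apply/subsetP => w; rewrite !inE => /orP[/(subsetP st)|/(subsetP sq)].
    by rewrite !inE => /andP[].
  by rewrite !inE negb_or => /andP[_].
- apply/eqP/setP => w; rewrite !inE; apply/idP/idP => [/andP[/orP[//|/(subsetP sq)] ]|wt].
    by rewrite !inE negb_or => /andP[/negbTE ->].
  rewrite wt /=; by move: (subsetP st w wt); rewrite !inE => /andP[].
Qed.

Hypothesis n9 : 9 <= #|T|.

Lemma ar1 : 2 * 2 <= #|T| - (6 - 1). Proof. lia. Qed.
Lemma ar2 : 2 * 1 <= #|T| - (6 - 1). Proof. lia. Qed.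

Lemma card3U (S : finType) (X A B C : {set S}) : X \subset A :|: B :|: C ->
  #|X| <= #|A| + #|B| + #|C|.
Proof.
move=> /subset_leq_card h; apply: (leq_trans h).
rewrite cardsU [#|A :|: B|]cardsU; lia.
Qed.

Lemma core : #|P| + #|Q| <= #|K 3 (~: b) :\: K 3 (~: a)|.
Proof.
have cI : 0 < #|a :&: b| by rewrite card_gt0 setI_eq0.
have cIa : #|a :&: b| <= #|a| by apply: subset_leq_card; apply: subsetIl.
have cI2 : #|a :&: b| != 3.
  apply/eqP => e; move: ab; rewrite eqEcard ca cb leqnn andbT.
  have : a :&: b == a by rewrite eqEcard subsetIl ca e.
  by move/eqP => <-; rewrite subsetIr.
have cU : #|U| = #|T| - (6 - #|a :&: b|) by rewrite cardC' cardsU ca cb; lia.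
have cba : #|b :\: a| = 3 - #|a :&: b| by rewrite cardsD setIC cb.
have cab : #|a :\: b| = 3 - #|a :&: b| by rewrite cardsD ca.
have Px : forall x, x \in P -> (x :&: b \subset b :\: a) && (0 < #|x :&: b|).
  move=> x /hP /and3P[_ dxa nxb]; rewrite card_gt0 setI_eq0 nxb andbT.
  apply/subsetP => z; rewrite !inE => /andP[zx zb]; rewrite zb andbT.
  by apply/negP => za; move/disjP: dxa => /(_ z zx za).
have Qy : forall y, y \in Q -> (y :&: a \subset a :\: b) && (0 < #|y :&: a|).
  move=> y /hQ /and3P[_ dyb nya]; rewrite card_gt0 setI_eq0 nya andbT.
  apply/subsetP => z; rewrite !inE => /andP[zy za]; rewrite za andbT.
  by apply/negP => zb; move/disjP: dyb => /(_ z zy zb).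
have [c2|c1] : #|a :&: b| = 2 \/ #|a :&: b| = 1 by lia.
  have eP : #|P| = #|[set x in P | x :&: b == b :\: a]|.
    apply: eq_card => x; rewrite inE; case: (boolP (x \in P)) => //= /Px /andP[sx px].
    by apply/esym; rewrite eqEcard sx cba c2.
  have eQ : #|Q| = #|[set y in Q | y :&: a == a :\: b]|.
    apply: eq_card => y; rewrite inE; case: (boolP (y \in Q)) => //= /Qy /andP[sy py].
    by apply/esym; rewrite eqEcard sy cab c2.
  have h1 : #|b :\: a| + 2 = 3 by lia.
  have h2 : #|a :\: b| + 2 = 3 by lia.
  have B := blockPQ (subxx _) (subxx _) h1 h2.
  have N := blockN (subxx _) h2.
  have S : #|[set y in K 3 (~: b) :\: K 3 (~: a) | y :&: a == a :\: b]| <= #|K 3 (~: b) :\: K 3 (~: a)|.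
    by apply: subset_leq_card; apply/subsetP => y; rewrite inE => /andP[].
  have hU4 : 2 * 2 <= #|U| by rewrite cU c2; lia.
  have hp : 0 < #|a :\: b| by rewrite cab c2.
  rewrite eP eQ; apply: (leq_trans (B hU4)); apply: (leq_trans (N hp)); exact: S.
have /cards2P [b1 [b2 [nb eb]]] : #|b :\: a| == 2 by rewrite cba c1.
have /cards2P [a1 [a2 [na ea]]] : #|a :\: b| == 2 by rewrite cab c1.
have hP3 : #|P| <= #|[set x in P | x :&: b == [set b1]]| + #|[set x in P | x :&: b == [set b2]]|
    + #|[set x in P | x :&: b == b :\: a]|.
  apply: card3U; apply/subsetP => x xP; move: (Px x xP) => /andP[sx px].
  rewrite eb in sx; rewrite !inE xP eb /=.
  case: (sub2 sx _) => [|->|->|->]; rewrite ?eqxx ?orbT //.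
  by rewrite -card_gt0.
have hQ3 : #|Q| <= #|[set y in Q | y :&: a == [set a1]]| + #|[set y in Q | y :&: a == [set a2]]|
    + #|[set y in Q | y :&: a == a :\: b]|.
  apply: card3U; apply/subsetP => y yQ; move: (Qy y yQ) => /andP[sy py].
  rewrite ea in sy; rewrite !inE yQ ea /=.
  case: (sub2 sy _) => [|->|->|->]; rewrite ?eqxx ?orbT //.
  by rewrite -card_gt0.
have s1 : [set b1] \subset b :\: a by rewrite eb sub1set !inE eqxx.
have s2 : [set b2] \subset b :\: a by rewrite eb sub1set !inE eqxx orbT.
have t1 : [set a1] \subset a :\: b by rewrite ea sub1set !inE eqxx.
have t2 : [set a2] \subset a :\: b by rewrite ea sub1set !inE eqxx orbT.
have k1 : forall z : T, #|[set z]| + 2 = 3 by move=> z; rewrite cards1.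
have k2 : #|b :\: a| + 1 = 3 by rewrite cba c1.
have k3 : #|a :\: b| + 1 = 3 by rewrite cab c1.
have B1 := blockPQ s1 t1 (k1 _) (k1 _).
have B2 := blockPQ s2 t2 (k1 _) (k1 _).
have B3 := blockPQ (subxx _) (subxx _) k2 k3.
have N1 := blockN t1 (k1 _).
have N2 := blockN t2 (k1 _).
have N3 := blockN (subxx _) k3.
have n12 : [set a1] != [set a2] by apply: contra_neq na => /set1_inj.
have n13 : [set a1] != a :\: b by apply/eqP => e; move: cab; rewrite -e cards1 c1.
have n23 : [set a2] != a :\: b by apply/eqP => e; move: cab; rewrite -e cards1 c1.
have S3 := sel3 (K 3 (~: b) :\: K 3 (~: a)) (fun y => y :&: a) n12 n13 n23.
have hU4 : 2 * 2 <= #|U| by rewrite cU c1; apply: ar1.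
have hU2 : 2 * 1 <= #|U| by rewrite cU c1; apply: ar2.
have hp1 : forall z : T, 0 < #|[set z]| by move=> z; rewrite cards1.
have hp3 : 0 < #|a :\: b| by rewrite cab c1.
apply: (leq_trans (leq_add hP3 hQ3)).
exact: arE (B1 hU4) (B2 hU4) (B3 hU2) (N1 (hp1 _)) (N2 (hp1 _)) (N3 hp3) S3.
Qed.

End Core.

Lemma arC na p q w x y : x = na - p -> w - q <= y -> p + q <= w -> p <= na -> na <= x + y.
Proof. lia. Qed.

Lemma pick2 (S : finType) (Y : {set S}) : 1 < #|Y| -> exists u v, [/\ u \in Y, v \in Y & u != v].
Proof.
move=> h; have /card_gt0P[u uY] : 0 < #|Y| by lia.
have : 0 < #|Y :\ u| by move: h; rewrite (cardsD1 u Y) uY; lia.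
by move/card_gt0P => [v]; rewrite !inE => /andP[vu vY]; exists u, v; rewrite eq_sym.
Qed.

Section Conn.
Variable T : finType.
Hypothesis n9 : 9 <= #|T|.
Implicit Types (A B : {set {set T}}) (a b x y w Z : {set T}).

Lemma inK3 x : (x \in K 3 [set: T]) = (#|x| == 3).
Proof. by rewrite inK subsetT. Qed.

Lemma inNa x a : (x \in K 3 (~: a)) = (#|x| == 3) && [disjoint x & a].
Proof. by rewrite inK -disjoints_subset andbC. Qed.

Lemma card_Na a : #|a| = 3 -> #|K 3 (~: a)| = 'C(#|T| - 3, 3).
Proof. by move=> ca; rewrite card_K cardC' ca. Qed.

Lemma mkw (p : T) Z : #|Z| <= 6 -> p \notin Z ->
  exists w, [/\ #|w| = 3, p \in w & [disjoint w & Z]].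
Proof.
move=> cZ pZ.
have : 1 < #|~: (p |: Z)| by rewrite cardC' cardsU1 pZ; lia.
move/pick2 => [u [v [uY vY uv]]]; move: uY vY; rewrite !inE !negb_or => /andP[up uZ] /andP[vp vZ].
exists (p |: [set u; v]); split.
- by rewrite cardsU1 cards2 uv !inE negb_or eq_sym up /= eq_sym vp.
- by rewrite !inE eqxx.
- apply/disjP => z; rewrite !inE => /orP[/eqP ->|/orP[] /eqP ->].
  + by rewrite (negbTE pZ).
  + by rewrite (negbTE uZ).
  + by rewrite (negbTE vZ).
Qed.

Lemma conn A B a b : A \subset K 3 [set: T] -> B \subset K 3 [set: T] -> [disjoint A & B] ->
  cross A B -> a \in A -> b \in B ->
  'C(#|T| - 3, 3) <= #|(K 3 (~: a) :\: A) :|: (K 3 (~: b) :\: B)|.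
Proof.
move=> sA sB dAB cAB aA bB.
have ca : #|a| = 3 by move: (subsetP sA a aA); rewrite inK3 => /eqP.
have cb : #|b| = 3 by move: (subsetP sB b bB); rewrite inK3 => /eqP.
have nab : ~~ [disjoint a & b] by apply: cAB.
have ab : a != b by apply/eqP => e; move: (disjointFr dAB aA); rewrite e bB.
set Na := K 3 (~: a); set Nb := K 3 (~: b).
have hP : forall x, x \in Na :&: A -> [&& #|x| == 3, [disjoint x & a] & ~~ [disjoint x & b]].
  by move=> x; rewrite inE inNa => /andP[/andP[-> ->] xA] /=; apply: cAB.
have hQ : forall y, y \in Nb :&: B -> [&& #|y| == 3, [disjoint y & b] & ~~ [disjoint y & a]].
  by move=> y; rewrite inE inNa => /andP[/andP[-> ->] yB] /=; rewrite disjoint_sym; apply: cAB.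
have cPQ : cross (Na :&: A) (Nb :&: B).
  by move=> x y; rewrite !inE => /andP[_ xA] /andP[_ yB]; apply: cAB.
have co := core ca cb nab ab hP hQ cPQ n9.
set X := Na :\: A; set Y := (Nb :\: Na) :\: B.
have dXY : [disjoint X & Y] by apply/disjP => x; rewrite !inE => /andP[_ ->] /andP[_ /andP[]].
have sXY : X :|: Y \subset X :|: (Nb :\: B).
  by apply/subsetP => x; rewrite !inE => /orP[->//|/and3P[-> _ ->]]; rewrite orbT.
apply: (leq_trans _ (subset_leq_card sXY)); rewrite cardU_disj // -(card_Na ca).
apply: (arC (p := #|Na :&: A|) (q := #|Nb :&: B|) (w := #|Nb :\: Na|)) => //.
- by rewrite /X cardsD.
- rewrite /Y (cardsD (Nb :\: Na) B); apply: leq_sub2l; apply: subset_leq_card; apply/subsetP => x.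
  by rewrite !inE => /andP[/andP[_ ->] ->].
- by apply: subset_leq_card; apply: subsetIl.
Qed.

Lemma sub_R A B a b : A \subset K 3 [set: T] -> B \subset K 3 [set: T] -> cross A B ->
  a \in A -> b \in B ->
  (K 3 (~: a) :\: A) :|: (K 3 (~: b) :\: B) \subset K 3 [set: T] :\: (A :|: B).
Proof.
move=> sA sB cAB aA bB; apply/subsetP => x; rewrite in_setU !in_setD in_setU !inNa inK3.
case/orP => /andP[xA /andP[-> dx]]; rewrite andbT negb_or ?xA /=.
  by apply/negP => xB; move: (cAB a x aA xB); rewrite disjoint_sym dx.
rewrite andbT; apply/negP => xA'; by move: (cAB x b xA' bB); rewrite dx.
Qed.

Lemma disj_sub2 w Z (Y : {set T}) : [disjoint w & Z] -> Y \subset Z -> [disjoint w & Y].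
Proof. by move=> d sYZ; apply/disjP => z zw zY; move/disjP: d => /(_ z zw (subsetP sYZ z zY)). Qed.

Lemma strict_indep A B : A \subset K 3 [set: T] -> B \subset K 3 [set: T] -> cross A B ->
  (forall a a', a \in A -> a' \in A -> ~~ [disjoint a & a']) -> 1 < #|A| ->
  'C(#|T| - 3, 3) < #|K 3 [set: T] :\: (A :|: B)|.
Proof.
move=> sA sB cAB iA /pick2 [a1 [a2 [a1A a2A n12]]].
have ca1 : #|a1| = 3 by move: (subsetP sA a1 a1A); rewrite inK3 => /eqP.
have ca2 : #|a2| = 3 by move: (subsetP sA a2 a2A); rewrite inK3 => /eqP.
have /subsetPn [p pa1 pa2] : ~~ (a1 \subset a2).
  by apply: contra n12 => s12; rewrite eqEcard s12 ca1 ca2.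
have [w [cw pw dw]] := mkw (leq_trans (eq_leq ca2) (isT : 3 <= 6)) pa2.
have hR : w |: K 3 (~: a1) \subset K 3 [set: T] :\: (A :|: B).
  apply/subsetP => x; rewrite in_setU1 => /orP[/eqP ->|].
    rewrite in_setD in_setU inK3 cw eqxx andbT negb_or; apply/andP; split; apply/negP.
      by move=> wA; move: (iA a2 w a2A wA); rewrite disjoint_sym dw.
    by move=> wB; move: (cAB a2 w a2A wB); rewrite disjoint_sym dw.
  rewrite inNa => /andP[cx dx].
  rewrite in_setD in_setU inK3 cx andbT negb_or; apply/andP; split; apply/negP.
    by move=> xA; move: (iA a1 x a1A xA); rewrite disjoint_sym dx.
  by move=> xB; move: (cAB a1 x a1A xB); rewrite disjoint_sym dx.
apply: (leq_trans _ (subset_leq_card hR)).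
rewrite cardsU1 (card_Na ca1).
have -> : w \notin K 3 (~: a1).
  rewrite inNa; apply/negP => /andP[_ d]; by move/disjP: d => /(_ p pw pa1).
by [].
Qed.

Lemma conn_strict A B : A \subset K 3 [set: T] -> B \subset K 3 [set: T] -> [disjoint A & B] ->
  cross A B -> 1 < #|A| -> 1 < #|B| ->
  'C(#|T| - 3, 3) < #|K 3 [set: T] :\: (A :|: B)|.
Proof.
move=> sA sB dAB cAB hA hB.
case: (boolP [exists a : {set T}, exists a' : {set T}, [&& a \in A, a' \in A & [disjoint a & a']]]);
  last first.
  move=> nA; apply: strict_indep => // a a' aA a'A; apply/negP => d.
  by move/negP: nA; apply; apply/existsP; exists a; apply/existsP; exists a'; rewrite aA a'A d.
move=> /existsP[a /existsP[a' /and3P[aA a'A daa']]].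
case: (boolP [exists b : {set T}, exists b' : {set T}, [&& b \in B, b' \in B & [disjoint b & b']]]);
  last first.
  move=> nB; rewrite setUC; apply: strict_indep => //.
    by move=> x y xB yA; rewrite disjoint_sym; apply: cAB.
  move=> b b' bB b'B; apply/negP => d.
  by move/negP: nB; apply; apply/existsP; exists b; apply/existsP; exists b'; rewrite bB b'B d.
move=> /existsP[b /existsP[b' /and3P[bB b'B dbb']]].
have ca' : #|a'| = 3 by move: (subsetP sA a' a'A); rewrite inK3 => /eqP.
have cb' : #|b'| = 3 by move: (subsetP sB b' b'B); rewrite inK3 => /eqP.
have /set0Pn [p] : a :&: b != set0 by rewrite setI_eq0 cAB.
rewrite inE => /andP[pa pb].
have cZ : #|a' :|: b'| <= 6 by rewrite cardsU ca' cb'; apply: leq_subr.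
have pZ : p \notin a' :|: b'.
  rewrite in_setU negb_or; apply/andP; split.
    by rewrite (disjointFr daa' pa).
  by rewrite (disjointFr dbb' pb).
have [w [cw pw dw]] := mkw cZ pZ.
have dwa' : [disjoint w & a'] by apply: (disj_sub2 dw); apply: subsetUl.
have dwb' : [disjoint w & b'] by apply: (disj_sub2 dw); apply: subsetUr.
have hR : w |: ((K 3 (~: a) :\: A) :|: (K 3 (~: b) :\: B)) \subset K 3 [set: T] :\: (A :|: B).
  apply/subsetP => x; rewrite in_setU1 => /orP[/eqP ->|]; last by apply/subsetP: x; apply: sub_R.
  rewrite in_setD in_setU inK3 cw eqxx andbT negb_or; apply/andP; split; apply/negP.
    by move=> wA; move: (cAB w b' wA b'B); rewrite dwb'.
  by move=> wB; move: (cAB a' w a'A wB); rewrite disjoint_sym dwa'.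
apply: (leq_trans _ (subset_leq_card hR)).
rewrite cardsU1.
have -> : w \notin (K 3 (~: a) :\: A) :|: (K 3 (~: b) :\: B).
  rewrite in_setU !in_setD !inNa negb_or; apply/andP; split; apply/negP => /and3P[_ _ d].
    by move/disjP: d => /(_ p pw pa).
  by move/disjP: d => /(_ p pw pb).
by rewrite add1n ltnS; apply: conn.
Qed.

End Conn.

Section Kn.
Variable n : nat.
Hypothesis hn : 9 <= n.
Local Notation V := (kvert n 3).
Local Notation e := (kneser n 3).
Implicit Types (S C : {set V}) (x y z : V).

Lemma cardv x : #|val x| = 3. Proof. exact: (eqP (valP x)). Qed.

Lemma e_sym : symmetric e. Proof. by move=> x y; rewrite /kneser disjoint_sym. Qed.

Lemma e_irr x : ~~ e x x.
Proof.
rewrite /kneser; apply/negP => d.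
have : 0 < #|val x| by rewrite cardv.
by rewrite card_gt0 => /set0Pn [z zx]; move/disjP: d => /(_ z zx zx).
Qed.

Lemma del_sym S : symmetric (del_adj e S).
Proof. by move=> x y; rewrite /del_adj e_sym; case: (x \notin S); case: (y \notin S). Qed.

Lemma comp_mem S x y : (y \in comp_of e S x) = (y \notin S) && connect (del_adj e S) x y.
Proof. by rewrite inE in_setC. Qed.

Lemma comp_self S x : x \notin S -> x \in comp_of e S x.
Proof. by move=> xS; rewrite comp_mem xS connect0. Qed.

Lemma comp_subC S x : comp_of e S x \subset ~: S.
Proof. by apply/subsetP => y; rewrite comp_mem in_setC => /andP[]. Qed.

Lemma comp_eq S x y : y \in comp_of e S x -> comp_of e S y = comp_of e S x.
Proof.
rewrite comp_mem => /andP[_ cxy]; apply/setP => z; rewrite !comp_mem.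
case: (z \notin S) => //=; apply/idP/idP => h.
  exact: connect_trans cxy h.
by apply: connect_trans _ h; rewrite (sym_connect_sym (del_sym S)).
Qed.

Lemma comp_adj S x y z : y \in comp_of e S x -> z \notin S -> e y z -> z \in comp_of e S x.
Proof.
move=> /[dup] yC; rewrite comp_mem => /andP[yS cxy] zS eyz.
rewrite comp_mem zS; apply: connect_trans cxy (connect1 _).
by rewrite /del_adj yS zS.
Qed.

Definition comps S := [set comp_of e S x | x in ~: S].

Lemma comps_inv S C y : C \in comps S -> y \in C -> C = comp_of e S y.
Proof. by move=> /imsetP[x _ ->] /comp_eq ->. Qed.

Lemma comps_ne S C : C \in comps S -> exists2 x, x \notin S & x \in C.
Proof. by move=> /imsetP[x]; rewrite in_setC => xS ->; exists x => //; apply: comp_self. Qed.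

Lemma comps_subC S C : C \in comps S -> C \subset ~: S.
Proof. by move=> /imsetP[x _ ->]; apply: comp_subC. Qed.

Lemma comps_sep S C C' y z : C \in comps S -> C' \in comps S -> C != C' ->
  y \in C -> z \in C' -> (y != z) && ~~ e y z.
Proof.
move=> CS C'S nCC' yC zC'; apply/andP; split.
  apply/eqP => eyz; move: nCC'; rewrite (comps_inv CS yC) (comps_inv C'S zC') eyz.
  by rewrite eqxx.
apply/negP => eyz.
have zS : z \notin S by move: (subsetP (comps_subC C'S) z zC'); rewrite in_setC.
have zC : z \in C by rewrite (comps_inv CS yC); apply: comp_adj eyz => //; rewrite -(comps_inv CS yC).
by move: nCC'; rewrite (comps_inv CS zC) (comps_inv C'S zC') eqxx.
Qed.

Section Sep.
Variables A0 B0 : {set V}.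
Hypothesis dAB0 : [disjoint A0 & B0].
Hypothesis noe : forall y z, y \in A0 -> z \in B0 -> ~~ e y z.
Let A := [set val x | x in A0].
Let B := [set val x | x in B0].

Lemma sepA : A \subset K 3 [set: 'I_n].
Proof. by apply/subsetP => t /imsetP[x _ ->]; rewrite inK3 cardv. Qed.
Lemma sepB : B \subset K 3 [set: 'I_n].
Proof. by apply/subsetP => t /imsetP[x _ ->]; rewrite inK3 cardv. Qed.
Lemma sepD : [disjoint A & B].
Proof.
apply/disjP => t /imsetP[x xA ->] /imsetP[y yB] /val_inj exy.
by move: (disjointFr dAB0 xA); rewrite exy yB.
Qed.
Lemma sepC : cross A B.
Proof.
move=> t u /imsetP[x xA ->] /imsetP[y yB ->]; exact: noe.
Qed.
Lemma sepR : #|K 3 [set: 'I_n] :\: (A :|: B)| <= #|~: (A0 :|: B0)|.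
Proof.
apply: (@leq_trans #|[set val x | x in ~: (A0 :|: B0)]|); last first.
  by rewrite card_imset //; exact: val_inj.
apply: subset_leq_card; apply/subsetP => t.
rewrite in_setD in_setU inK3 negb_or => /andP[/andP[tA tB] ct].
apply/imsetP; exists (exist _ t ct : V) => //.
rewrite in_setC in_setU negb_or; apply/andP; split.
  by apply: contra tA => h; apply/imsetP; exists (exist _ t ct : V).
by apply: contra tB => h; apply/imsetP; exists (exist _ t ct : V).
Qed.

Lemma n9' : 9 <= #|'I_n|. Proof. by rewrite card_ord. Qed.

Lemma vcut : A0 != set0 -> B0 != set0 -> 'C(n - 3, 3) <= #|~: (A0 :|: B0)|.
Proof.
move=> /set0Pn[x xA] /set0Pn[y yB].
have xA' : val x \in A by apply: imset_f.
have yB' : val y \in B by apply: imset_f.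
have h := conn n9' sepA sepB sepD sepC xA' yB'; rewrite card_ord in h.
apply: (leq_trans h); apply: (leq_trans (subset_leq_card (sub_R sepA sepB sepC xA' yB'))).
exact: sepR.
Qed.

Lemma vcut_strict : 1 < #|A0| -> 1 < #|B0| -> 'C(n - 3, 3) < #|~: (A0 :|: B0)|.
Proof.
move=> hA hB.
have hA' : 1 < #|A| by rewrite card_imset //; apply: val_inj.
have hB' : 1 < #|B| by rewrite card_imset //; apply: val_inj.
have h := conn_strict n9' sepA sepB sepD sepC hA' hB'; rewrite card_ord in h.
exact: (leq_trans h sepR).
Qed.
End Sep.

End Kn.

Lemma sum_strict (S : finType) (X : {set S}) (f : S -> nat) m C0 : C0 \in X ->
  (forall C, C \in X -> m <= f C) -> m < f C0 -> #|X| * m < \sum_(C in X) f C.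
Proof.
move=> C0X hm hs; rewrite (bigD1 C0) //= (cardsD1 C0 X) C0X add1n mulSn.
rewrite -addSn; apply: leq_add => //.
rewrite -sum_nat_const; apply: (@leq_trans (\sum_(C in X | C != C0) m)).
  by rewrite [X in X <= _]big_mkcond [X in _ <= X]big_mkcond /=; apply: leq_sum => C _; rewrite !inE andbC.
by apply: leq_sum => C /andP[CX _]; apply: hm.
Qed.

Section Kn2.
Variable n : nat.
Hypothesis hn : 9 <= n.
Local Notation V := (kvert n 3).
Local Notation e := (kneser n 3).
Implicit Types (S C : {set V}) (x y z : V).

Definition NS S C := [set s in S | [exists y in C, e y s]].

Lemma NS_sub S C : NS S C \subset S.
Proof. by apply/subsetP => s; rewrite inE => /andP[]. Qed.

Lemma other_comp S C : 1 < ncomp e S -> C \in comps S -> exists2 C', C' \in comps S & C' != C.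
Proof.
move=> /pick2 [C1 [C2 [C1S C2S n12]]] CS.
case: (eqVneq C1 C) => [e1|n1C]; last by exists C1.
by exists C2 => //; rewrite -e1 eq_sym.
Qed.

Lemma NS_big S C : 1 < ncomp e S -> C \in comps S -> 'C(n - 3, 3) <= #|NS S C|.
Proof.
move=> h2 CS.
have [C' C'S nC'] := other_comp h2 CS.
have dAB : [disjoint C & ~: (C :|: NS S C)].
  by apply/disjP => z zC; rewrite in_setC in_setU zC.
have noe : forall y z, y \in C -> z \in ~: (C :|: NS S C) -> ~~ e y z.
  move=> y z yC; rewrite in_setC in_setU negb_or => /andP[zC zN]; apply/negP => eyz.
  case: (boolP (z \in S)) => zS.
    by move: zN; rewrite inE zS /=; case/negP; apply/existsP; exists y; rewrite yC.
  by move: zC; rewrite (comps_inv CS yC) (comp_adj _ zS eyz) // -(comps_inv CS yC).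
have [x xS xC] := comps_ne CS.
have [x' x'S x'C'] := comps_ne C'S.
have ne1 : C != set0 by apply/set0Pn; exists x.
have ne2 : ~: (C :|: NS S C) != set0.
  apply/set0Pn; exists x'; rewrite in_setC in_setU negb_or; apply/andP; split.
    apply/negP => x'C; move: nC'; rewrite (comps_inv C'S x'C') -(comps_inv CS x'C) eqxx //.
  by apply/negP => /(subsetP (NS_sub S C)); apply/negP.
apply: (leq_trans (vcut hn dAB noe ne1 ne2)); apply: subset_leq_card.
apply/subsetP => z; rewrite in_setC !in_setU negb_or in_setC in_setU => /andP[zC].
by rewrite negb_or zC /= negbK.
Qed.

Lemma NS_strict S C : 2 < ncomp e S -> C \in comps S -> 1 < #|C| -> 'C(n - 3, 3) < #|NS S C|.
Proof.
move=> h3 CS hC.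
have ec : ncomp e S = #|comps S| by [].
have h2 : 1 < #|comps S :\ C| by move: h3; rewrite ec (cardsD1 C (comps S)) CS add1n ltnS.
have [C1 [C2 [C1S C2S n12]]] := pick2 h2.
move: C1S C2S; rewrite !inE => /andP[n1 C1S] /andP[n2 C2S].
have dAB : [disjoint C & ~: (C :|: NS S C)].
  by apply/disjP => z zC; rewrite in_setC in_setU zC.
have noe : forall y z, y \in C -> z \in ~: (C :|: NS S C) -> ~~ e y z.
  move=> y z yC; rewrite in_setC in_setU negb_or => /andP[zC zN]; apply/negP => eyz.
  case: (boolP (z \in S)) => zS.
    by move: zN; rewrite inE zS /=; case/negP; apply/existsP; exists y; rewrite yC.
  by move: zC; rewrite (comps_inv CS yC) (comp_adj _ zS eyz) // -(comps_inv CS yC).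
have [x1 x1S x1C] := comps_ne C1S.
have [x2 x2S x2C] := comps_ne C2S.
have inB : forall C' x', C' \in comps S -> C' != C -> x' \in C' -> x' \in ~: (C :|: NS S C).
  move=> C' x' C'S nC' x'C'; rewrite in_setC in_setU negb_or; apply/andP; split.
    apply/negP => x'C; move: nC'; rewrite (comps_inv C'S x'C') -(comps_inv CS x'C) eqxx //.
  apply/negP => /(subsetP (NS_sub S C)).
  by move: (subsetP (comps_subC C'S) x' x'C'); rewrite in_setC => /negP.
have hB : 1 < #|~: (C :|: NS S C)|.
  rewrite (cardsD1 x1) (inB _ _ C1S n1 x1C) ltnS card_gt0; apply/set0Pn; exists x2.
  rewrite !inE; have := inB _ _ C2S n2 x2C; rewrite !inE => ->; rewrite andbT.
  by case/andP: (comps_sep C1S C2S n12 x1C x2C) => /negbTE; rewrite eq_sym => ->.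
apply: (leq_trans (vcut_strict hn dAB noe hC hB)); apply: subset_leq_card.
apply/subsetP => z; rewrite in_setC !in_setU negb_or in_setC in_setU => /andP[zC].
by rewrite negb_or zC /= negbK.
Qed.

Lemma D_bound S s : s \in S ->
  #|[set C in comps S | s \in NS S C]| * (n - 3) <= 3 * 'C(n - 3, 3).
Proof.
move=> sS; set D := [set C in comps S | s \in NS S C].
pose r C := if [pick y in C | e y s] is Some y then val y else set0.
have rP : forall C, C \in D -> exists y, [/\ y \in C, e y s & r C = val y].
  move=> C; rewrite !inE sS /= => /andP[_ /existsP[y0 /andP[y0C ey0]]].
  rewrite /r; case: pickP => [y /andP[yC ey]|/(_ y0)]; first by exists y.
  by rewrite y0C ey0.
have DS : forall C, C \in D -> C \in comps S by move=> C; rewrite inE => /andP[].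
pose F := [set r C | C in D].
have cF : #|F| = #|D|.
  apply: card_in_imset => C1 C2 C1D C2D.
  have [y1 [y1C ey1 ->]] := rP C1 C1D; have [y2 [y2C ey2 ->]] := rP C2 C2D.
  move/val_inj => e12; apply/eqP; apply/negP => /negP n12.
  by move: (comps_sep (DS _ C1D) (DS _ C2D) n12 y1C y2C); rewrite e12 eqxx.
have sF : F \subset K 3 (~: val s).
  apply/subsetP => t /imsetP[C CD ->]; have [y [yC ey ->]] := rP C CD.
  by rewrite inK -disjoints_subset cardv eqxx andbT; exact: ey.
have iF : icg F.
  move=> t1 t2 /imsetP[C1 C1D ->] /imsetP[C2 C2D ->].
  case: (eqVneq C1 C2) => [<-|n12].
    by have [y [_ _ ->]] := rP C1 C1D; apply: e_irr.
  have [y1 [y1C _ ->]] := rP C1 C1D; have [y2 [y2C _ ->]] := rP C2 C2D.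
  by case/andP: (comps_sep (DS _ C1D) (DS _ C2D) n12 y1C y2C).
have cU : #|~: val s| = n - 3 by rewrite cardC' card_ord cardv.
have := ekr (m := n - 3) cU _ sF iF; rewrite cF; apply.
by apply/orP; right; lia.
Qed.

Lemma chain S : 1 < ncomp e S ->
  \sum_(C in comps S) #|NS S C| * (n - 3) <= #|S| * (3 * 'C(n - 3, 3)).
Proof.
move=> h2.
have E : \sum_(C in comps S) #|NS S C| = \sum_(s in S) #|[set C in comps S | s \in NS S C]|.
  under eq_bigr => C _ do rewrite card_sel.
  rewrite exchange_big /=; apply: eq_bigr => s sS; rewrite card_sel.
  by apply: eq_bigr => C _; rewrite inE sS.
rewrite -big_distrl /= E big_distrl /= -sum_nat_const.
by apply: leq_sum => s sS; apply: D_bound.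
Qed.

Lemma main_bound S : 1 < ncomp e S -> ncomp e S * (n - 3) <= 3 * #|S|.
Proof.
move=> h2; have := chain h2.
have cpos : 0 < 'C(n - 3, 3) by rewrite bin_gt0; lia.
have L : ncomp e S * 'C(n - 3, 3) <= \sum_(C in comps S) #|NS S C|.
  rewrite -sum_nat_const; apply: leq_sum => C CS; exact: NS_big.
move=> h; rewrite -big_distrl /= in h; have := leq_trans (leq_mul L (leqnn (n - 3))) h.
rewrite mulnAC mulnA leq_pmul2r // => H; by rewrite [3 * _]mulnC.
Qed.

Lemma binid : 3 * 'C(n - 3, 3) = (n - 3) * 'C(n - 4, 2).
Proof. have -> : n - 4 = (n - 3).-1 by lia. by rewrite (mul_bin_diag (n - 3) 2). Qed.

Lemma eq_case S : 1 < ncomp e S -> 3 * #|S| = ncomp e S * (n - 3) ->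
  forall C, C \in comps S -> #|C| <= 1.
Proof.
move=> h2 eS C CS; rewrite leqNgt; apply/negP => hC.
have cpos : 0 < 'C(n - 3, 3) by rewrite bin_gt0; lia.
have ec : ncomp e S = #|comps S| by [].
have h3 : 2 < ncomp e S.
  have : 'C(n - 3, 3) <= #|S| by apply: (leq_trans (NS_big h2 CS)); apply/subset_leq_card/NS_sub.
  rewrite -(leq_pmul2l (isT : 0 < 3)) eS binid [ncomp e S * _]mulnC leq_pmul2l; last by lia.
  move=> h; apply: (leq_trans _ h); apply: (@leq_trans 'C(5, 2)) => //; apply: leq_bin2l; lia.
have st := NS_strict h3 CS hC.
have := chain h2.
have := sum_strict (f := fun C => #|NS S C| * (n - 3)) (m := 'C(n - 3, 3) * (n - 3)) CS.
move=> H1 H2; have := leq_trans (H1 _ _) H2.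
  have XY : #|comps S| * ('C(n - 3, 3) * (n - 3)) = #|S| * (3 * 'C(n - 3, 3)).
    by rewrite -ec mulnCA -eS mulnA mulnC [_ * 3]mulnC.
  rewrite XY ltnn => H; suff: false by []. apply: H.
- by move=> C' C'S; rewrite leq_mul2r NS_big // orbT.
- by rewrite ltn_mul2r st andbT; lia.
Qed.


End Kn2.

Import Order.TTheory GRing.Theory Num.Theory.
Local Open Scope ring_scope.


Lemma rat_le (s c n : nat) : (0 < c)%N -> (3 <= n)%N -> (c * (n - 3) <= 3 * s)%N ->
  (n%:R / 3 - 1 : rat) <= s%:R / c%:R.
Proof.
move=> cpos n3 h.
have cR : (0 : rat) < c%:R by rewrite ltr0n.
rewrite ler_pdivlMr //.
have : ((c * (n - 3))%:R <= (3 * s)%:R :> rat) by rewrite ler_nat.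
rewrite !natrM natrB // => h'.
nra.
Qed.

Lemma rat_ge (s c n : nat) : (0 < c)%N -> (3 <= n)%N -> (3 * s <= c * (n - 3))%N ->
  s%:R / c%:R <= (n%:R / 3 - 1 : rat).
Proof.
move=> cpos n3 h.
have cR : (0 : rat) < c%:R by rewrite ltr0n.
rewrite ler_pdivrMr //.
have : ((3 * s)%:R <= (c * (n - 3))%:R :> rat) by rewrite ler_nat.
rewrite !natrM natrB // => h'.
nra.
Qed.

Lemma rat_eq (s c n : nat) : (0 < c)%N -> (3 <= n)%N ->
  s%:R / c%:R = (n%:R / 3 - 1 : rat) -> (3 * s = c * (n - 3))%N.
Proof.
move=> cpos n3 h.
have cR : (0 : rat) < c%:R by rewrite ltr0n.
apply/eqP; rewrite -(eqr_nat rat) !natrM natrB //.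
have : s%:R = (n%:R / 3 - 1) * c%:R :> rat by rewrite -h mulfVK // gt_eqF.
by move=> ->; apply/eqP; field.
Qed.

Local Close Scope ring_scope.


Lemma conn_stuck (T : finType) (r : rel T) x y : (forall z, ~~ r x z) -> connect r x y -> y = x.
Proof.
move=> h /connectP [[|z p] /= pth ->] //.
by move: pth => /andP[rxz _]; move: (h z); rewrite rxz.
Qed.

Section Final.
Variable n : nat.
Hypothesis hn : (9 <= n)%N.
Local Notation V := (kvert n 3).
Local Notation e := (kneser n 3).

Lemma card_V : #|{: V}| = 'C(n, 3).
Proof.
rewrite card_sig -[n in 'C(n, _)]card_ord -card_draws.
by apply: eq_card => A; rewrite !inE.
Qed.

Let h0 : (0 < n)%N. Proof. lia. Qed.
Let i0 : 'I_n := Ordinal h0.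
Definition star := [set x : V | i0 \in val x].

Lemma star_comp x : x \in star -> comp_of e (~: star) x = [set x].
Proof.
move=> xs; apply/setP => y; rewrite comp_mem in_setC negbK inE; apply/andP/eqP.
  case=> ys cxy; apply: conn_stuck cxy => z; rewrite /del_adj !in_setC !negbK xs /=.
  apply/negP => /andP[zs exz]; move: xs zs; rewrite !inE => xs zs.
  by move: (disjointFr exz xs); rewrite zs.
by move=> ->; rewrite xs connect0.
Qed.

Lemma ncomp_star : ncomp e (~: star) = #|star|.
Proof.
rewrite /ncomp setCK (eq_in_imset star_comp) card_imset //; exact: set1_inj.
Qed.

Lemma star_big : ('C(n - 1, 2) <= #|star|)%N.
Proof.
have : (0 < #|{: V}|)%N by rewrite card_V bin_gt0; lia.
case/card_gt0P => x0 _.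
pose f q := insubd x0 (i0 |: q).
have cq : forall q, q \in K 2 (~: [set i0]) -> #|i0 |: q| == 3.
  move=> q; rewrite inK => /andP[sq /eqP cq]; rewrite cardsU1 cq.
  have -> : i0 \notin q by apply/negP => /(subsetP sq); rewrite !inE eqxx.
  by [].
have vf : forall q, q \in K 2 (~: [set i0]) -> val (f q) = i0 |: q.
  by move=> q qK; rewrite /f insubdK //; exact: cq.
have cK : #|K 2 (~: [set i0])| = 'C(n - 1, 2) by rewrite card_K cardC' cards1 card_ord.
rewrite -cK -(card_in_imset (f := f)); last first.
  move=> q1 q2 q1K q2K /(congr1 val); rewrite !vf // => e12.
  have nq : forall q, q \in K 2 (~: [set i0]) -> i0 \notin q.
    by move=> q; rewrite inK => /andP[sq _]; apply/negP => /(subsetP sq); rewrite !inE eqxx.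
  by rewrite -(setU1K (nq _ q1K)) e12 setU1K // nq.
apply: subset_leq_card; apply/subsetP => x /imsetP[q qK ->].
by rewrite inE vf // setU11.
Qed.

Lemma star_cut : vertex_cut e (~: star).
Proof.
rewrite /vertex_cut ncomp_star; apply: leq_trans star_big.
apply: (@leq_trans 'C(8, 2)) => //; apply: leq_bin2l; lia.
Qed.

Lemma star_ratio : (3 * #|~: star| <= #|star| * (n - 3))%N.
Proof.
have hc := star_big.
have hN : (#|star| + #|~: star| = 'C(n, 3))%N by rewrite cardsC card_V.
have hd : (n * 'C(n - 1, 2) = 3 * 'C(n, 3))%N.
  have -> : (n - 1 = n.-1)%N by lia. by rewrite mul_bin_diag.
move: hc hN hd; move: #|star| #|~: star| 'C(n, 3) 'C(n - 1, 2) => c s N C1.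
nia.
Qed.

Lemma indep_bound (J : {set V}) : independent e J -> (#|J| * n <= 3 * 'C(n, 3))%N.
Proof.
move=> /forallP iJ.
have cU : #|[set: 'I_n]| = n by rewrite cardsT card_ord.
have sF : [set val x | x in J] \subset K 3 [set: 'I_n].
  by apply/subsetP => t /imsetP[x _ ->]; rewrite inK3 cardv.
have iF : icg [set val x | x in J].
  move=> t u /imsetP[x xJ ->] /imsetP[y yJ ->].
  by move: (iJ x); rewrite xJ /= => /forallP /(_ y); rewrite yJ.
have := ekr cU _ sF iF; rewrite card_imset; last exact: val_inj.
by apply; apply/orP; right; lia.
Qed.

End Final.


Local Open Scope ring_scope.

Theorem theorem4p1 (n : nat) (hn : (9 <= n)%N) :
  toughness (kneser n 3) = n%:R / 3 - 1 /\
  (forall S : {set kvert n 3},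
      vertex_cut (kneser n 3) S ->
      (#|S|%:R / (ncomp (kneser n 3) S)%:R : rat) = n%:R / 3 - 1 ->
      exists I : {set kvert n 3},
        maximum_independent (kneser n 3) I /\ S = ~: I).
Proof.
have n3 : (3 <= n)%N by lia.
split.
  apply/le_anti/andP; split.
    rewrite /toughness; apply: (@bigmin_inf _ _ _ _ (~: star hn)); first exact: star_cut.
    apply: rat_ge => //; last by rewrite ncomp_star; exact: star_ratio.
    by rewrite ncomp_star; apply: leq_trans (star_big hn); rewrite bin_gt0; lia.
  apply: le_bigmin.
    have hd : (n * 'C(n - 1, 2) = 3 * 'C(n, 3))%N.
      have -> : (n - 1 = n.-1)%N by lia.
      by rewrite mul_bin_diag.
    have h1 : (n <= 3 * #|{: kvert n 3}|)%N.
      rewrite card_V // -hd -{1}[n]muln1 leq_mul2l bin_gt0; lia.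
    have : (n%:R <= (3 * #|{: kvert n 3}|)%:R :> rat) by rewrite ler_nat.
    rewrite natrM => h; lra.
  move=> S cS; apply: rat_le => //; first by apply: ltnW.
  exact: (main_bound hn cS).
move=> S cS hr.
have cpos : (0 < ncomp (kneser n 3) S)%N by apply: ltnW.
have eS := rat_eq cpos n3 hr.
have eS' : (3 * #|S| = ncomp (kneser n 3) S * (n - 3))%N by rewrite eS mulnC.
have sing := eq_case hn cS eS'.
have compx : forall x, x \notin S -> comp_of (kneser n 3) S x = [set x].
  move=> x xS; apply/eqP; rewrite eq_sym eqEcard sub1set comp_self // cards1.
  by apply: sing; apply/imsetP; exists x; rewrite ?in_setC.
have indep : independent (kneser n 3) (~: S).
  apply/forallP => x; apply/implyP => xS; apply/forallP => y; apply/implyP => yS.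
  apply/negP => exy; move: xS yS; rewrite !in_setC => xS yS.
  have : y \in comp_of (kneser n 3) S x by apply: comp_adj exy => //; apply: comp_self.
  rewrite compx // inE => /eqP eyx; move: exy; rewrite eyx.
  by move/negP: (e_irr x).
have nc : ncomp (kneser n 3) S = #|~: S|.
  rewrite /ncomp (eq_in_imset (g := set1)); last by move=> x; rewrite in_setC => /compx.
  by rewrite card_imset //; exact: set1_inj.
exists (~: S); split; last by rewrite setCK.
apply/andP; split => //; apply/forallP => J; apply/implyP => /indep_bound hJ.
have hN : (#|S| + #|~: S| = 'C(n, 3))%N by rewrite cardsC card_V.
have : (#|J| * n <= #|~: S| * n)%N.
  apply: (leq_trans (hJ hn)); rewrite -hN mulnDr eS' nc; lia.
by rewrite leq_pmul2r //; lia.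
Qed.
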